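(* Let $\mathbf{V}$ be a variety of interior algebras and $B\in\mathbf{V}$. Then $B^*$ is projective in $\mathbf{V}^*$ if and only if $B^*$ is projective in $\mathbf{V}$.
   Context: An interior algebra is a Boolean algebra with an operator $g$ satisfying $g(1)=1$, $g(xy)=g(x)g(y)$, $g(x)\le x$, $gg(x)=g(x)$; $a$ is open if $g(a)=a$. $B^*$ is the subalgebra of $B$ generated by its open elements; an algebra equal to its $^*$-subalgebra is a $^*$-algebra. $\mathbf{V}^*$ is the variety generated by the $^*$-algebras in $\mathbf{V}$. *)

(* Defs.v *)
Set Implicit Arguments.

Record IA : Type := MkIA {
  car :> Type;
  join : car -> car -> car;
  meet : car -> car -> car;
  compl : car -> car;
  zero : car;
  one : car;
  g : car -> car;
  joinC : forall x y, join x y = join y x;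
  meetC : forall x y, meet x y = meet y x;
  joinA : forall x y z, join x (join y z) = join (join x y) z;
  meetA : forall x y z, meet x (meet y z) = meet (meet x y) z;
  join_meet_absorb : forall x y, join x (meet x y) = x;
  meet_join_absorb : forall x y, meet x (join x y) = x;
  meet_join_distr : forall x y z, meet x (join y z) = join (meet x y) (meet x z);
  join0 : forall x, join x zero = x;
  meet1 : forall x, meet x one = x;
  join_compl : forall x, join x (compl x) = one;
  meet_compl : forall x, meet x (compl x) = zero;
  g_one : g one = one;
  g_meet : forall x y, g (meet x y) = meet (g x) (g y);
  g_le : forall x, meet (g x) x = g x;
  g_idem : forall x, g (g x) = g x
}.

Arguments join {i} _ _.
Arguments meet {i} _ _.
Arguments compl {i} _.
Arguments g {i} _.

Definition is_hom {A C : IA} (f : A -> C) : Prop :=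
  (forall x y, f (join x y) = join (f x) (f y)) /\
  (forall x y, f (meet x y) = meet (f x) (f y)) /\
  (forall x, f (compl x) = compl (f x)) /\
  f (zero A) = zero C /\ f (one A) = one C /\
  (forall x, f (g x) = g (f x)).

Definition surjective {X Y : Type} (f : X -> Y) : Prop := forall y, exists x, f x = y.
Definition injective {X Y : Type} (f : X -> Y) : Prop := forall x y, f x = f y -> x = y.

(** [P] (with homomorphisms [p i]) is a direct product of the family [A]
    (up to isomorphism: the induced map into the product is bijective). *)
Definition is_product (I : Type) (A : I -> IA) (P : IA) (p : forall i, P -> A i) : Prop :=
  (forall i, is_hom (p i)) /\
  (forall x y : P, (forall i, p i x = p i y) -> x = y) /\
  (forall a : forall i, A i, exists x : P, forall i, p i x = a i).

Definition variety (V : IA -> Prop) : Prop :=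
  (forall (A C : IA) (f : A -> C), V A -> is_hom f -> surjective f -> V C) /\
  (forall (A C : IA) (e : C -> A), V A -> is_hom e -> injective e -> V C) /\
  (forall (I : Type) (A : I -> IA) (P : IA) (p : forall i, P -> A i),
      (forall i, V (A i)) -> is_product A P p -> V P).

Definition gen_variety (K : IA -> Prop) (A : IA) : Prop :=
  forall W, variety W -> (forall C, K C -> W C) -> W A.

Definition is_open {A : IA} (a : A) : Prop := g a = a.

Inductive gen_open {A : IA} : A -> Prop :=
  | go_open : forall a, is_open a -> gen_open a
  | go_zero : gen_open (@zero A)
  | go_one : gen_open (@one A)
  | go_join : forall a b, gen_open a -> gen_open b -> gen_open (join a b)
  | go_meet : forall a b, gen_open a -> gen_open b -> gen_open (meet a b)
  | go_compl : forall a, gen_open a -> gen_open (compl a).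

Definition star_algebra (A : IA) : Prop := forall a : A, gen_open a.

Definition star_variety (V : IA -> Prop) : IA -> Prop :=
  gen_variety (fun A => V A /\ star_algebra A).

(** [S] (via the embedding [e]) is B^*: e is an injective homomorphism of
    interior algebras whose image is exactly the Boolean subalgebra of B
    generated by the open elements of B. *)
Definition is_star_of (S B : IA) (e : S -> B) : Prop :=
  is_hom e /\ injective e /\ (forall b : B, gen_open b <-> exists s, e s = b).

Definition projective (K : IA -> Prop) (P : IA) : Prop :=
  K P /\
  forall (A C : IA) (f : A -> C) (h : P -> C),
    K A -> K C -> is_hom f -> surjective f -> is_hom h ->
    exists k : P -> A, is_hom k /\ forall x, f (k x) = h x.

(* Main.v *)
Require Import Defs.
From Stdlib Require Import ProofIrrelevance.

Lemma sub_eq {A : Type} (P : A -> Prop) (x y : {a : A | P a}) :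
  proj1_sig x = proj1_sig y -> x = y.
Proof.
  destruct x as [x px], y as [y py]; simpl; intro E; subst.
  f_equal; apply proof_irrelevance.
Qed.

Definition sub (A : IA) (P : A -> Prop) (H0 : P (zero A)) (H1 : P (one A))
  (Hj : forall x y, P x -> P y -> P (join x y))
  (Hm : forall x y, P x -> P y -> P (meet x y))
  (Hc : forall x, P x -> P (compl x))
  (Hg : forall x, P x -> P (g x)) : IA.
Proof.
  refine (@MkIA {x : A | P x}
    (fun x y => exist _ (join (proj1_sig x) (proj1_sig y)) (Hj _ _ (proj2_sig x) (proj2_sig y)))
    (fun x y => exist _ (meet (proj1_sig x) (proj1_sig y)) (Hm _ _ (proj2_sig x) (proj2_sig y)))
    (fun x => exist _ (compl (proj1_sig x)) (Hc _ (proj2_sig x)))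
    (exist _ (zero A) H0) (exist _ (one A) H1)
    (fun x => exist _ (g (proj1_sig x)) (Hg _ (proj2_sig x)))
    _ _ _ _ _ _ _ _ _ _ _ _ _ _ _);
  intros; apply sub_eq; simpl.
  all: first [ apply joinC | apply meetC | apply joinA | apply meetA
             | apply join_meet_absorb | apply meet_join_absorb | apply meet_join_distr
             | apply join0 | apply meet1 | apply join_compl | apply meet_compl
             | apply g_one | apply g_meet | apply g_le | apply g_idem ].
Defined.

Lemma tr {X : IA} (x y : X) : gen_open x -> x = y -> gen_open y.
Proof. intros H E; subst; exact H. Qed.

Section Star.
Variable A : IA.

Lemma go_g (x : A) : gen_open x -> gen_open (g x).
Proof. intros _. apply go_open. unfold is_open. apply g_idem. Qed.

Definition star : IA :=
  @sub A gen_open (go_zero) (go_one) (@go_join A) (@go_meet A) (@go_compl A) go_g.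

Lemma star_incl_hom : is_hom (fun x : star => proj1_sig x).
Proof. repeat split; reflexivity. Qed.

Lemma star_incl_inj : injective (fun x : star => proj1_sig x).
Proof. intros x y E. apply sub_eq. exact E. Qed.

Lemma star_star : star_algebra star.
Proof.
  intros [a pa0].
  assert (K : forall a, gen_open a -> forall pa : gen_open a, @gen_open star (exist _ a pa)).
  2: exact (K a pa0 pa0).
  clear a pa0. intros a H0.
  induction H0 as [a Ho| | |a b Ha IHa Hb IHb|a b Ha IHa Hb IHb|a Ha IHa]; intro pa.
  - apply (@tr star (@g star (exist _ a pa))).
    + apply go_open. unfold is_open. apply sub_eq. simpl. apply g_idem.
    + apply sub_eq. simpl. exact Ho.
  - apply (@tr star (zero star)); [apply go_zero | apply sub_eq; reflexivity].
  - apply (@tr star (one star)); [apply go_one | apply sub_eq; reflexivity].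
  - apply (@tr star (@join star (exist _ a Ha) (exist _ b Hb)));
      [apply go_join; auto | apply sub_eq; reflexivity].
  - apply (@tr star (@meet star (exist _ a Ha) (exist _ b Hb)));
      [apply go_meet; auto | apply sub_eq; reflexivity].
  - apply (@tr star (@compl star (exist _ a Ha)));
      [apply go_compl; auto | apply sub_eq; reflexivity].
Qed.
End Star.

Lemma hom_go {A C : IA} (f : A -> C) : is_hom f -> forall a, gen_open a -> gen_open (f a).
Proof.
  intros (Hj & Hm & Hc & H0 & H1 & Hg) a Ha.
  induction Ha.
  - apply go_open. unfold is_open in *. rewrite <- Hg. congruence.
  - rewrite H0. apply go_zero.
  - rewrite H1. apply go_one.
  - rewrite Hj. apply go_join; auto.
  - rewrite Hm. apply go_meet; auto.
  - rewrite Hc. apply go_compl; auto.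
Qed.

Lemma surj_go {A C : IA} (f : A -> C) : is_hom f -> surjective f ->
  forall c, gen_open c -> exists a, gen_open a /\ f a = c.
Proof.
  intros (Hj & Hm & Hc & H0 & H1 & Hg) Hs c Hco.
  induction Hco.
  - destruct (Hs a) as [x Hx]. exists (g x). split.
    + apply go_open. unfold is_open. apply g_idem.
    + rewrite Hg, Hx. exact H.
  - exists (zero A). split; [apply go_zero | auto].
  - exists (one A). split; [apply go_one | auto].
  - destruct IHHco1 as [x [? ?]], IHHco2 as [y [? ?]].
    exists (join x y). split; [apply go_join; auto | rewrite Hj; congruence].
  - destruct IHHco1 as [x [? ?]], IHHco2 as [y [? ?]].
    exists (meet x y). split; [apply go_meet; auto | rewrite Hm; congruence].
  - destruct IHHco as [x [? ?]].
    exists (compl x). split; [apply go_compl; auto | rewrite Hc; congruence].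
Qed.

Lemma star_of_star (S B : IA) (e : S -> B) : is_star_of S B e -> star_algebra S.
Proof.
  intros [He [Hi Hiff]].
  destruct He as (Hj & Hm & Hc & H0 & H1 & Hg).
  assert (K : forall b, gen_open b -> forall s, e s = b -> gen_open s).
  { intros b Hb. induction Hb; intros s Es.
    - apply go_open. unfold is_open in *. apply Hi. rewrite Hg. congruence.
    - replace s with (zero S) by (apply Hi; congruence). apply go_zero.
    - replace s with (one S) by (apply Hi; congruence). apply go_one.
    - destruct (proj1 (Hiff a) Hb1) as [s1 E1]. destruct (proj1 (Hiff b) Hb2) as [s2 E2].
      replace s with (join s1 s2) by (apply Hi; rewrite Hj; congruence).
      apply go_join; auto.
    - destruct (proj1 (Hiff a) Hb1) as [s1 E1]. destruct (proj1 (Hiff b) Hb2) as [s2 E2].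
      replace s with (meet s1 s2) by (apply Hi; rewrite Hm; congruence).
      apply go_meet; auto.
    - destruct (proj1 (Hiff a) Hb) as [s1 E1].
      replace s with (compl s1) by (apply Hi; rewrite Hc; congruence).
      apply go_compl; auto. }
  intro s. apply (K (e s)); [apply Hiff; eauto | reflexivity].
Qed.

Lemma star_variety_sub (V : IA -> Prop) (HV : variety V) A : star_variety V A -> V A.
Proof. intro H. apply H; [exact HV | tauto]. Qed.

Lemma star_variety_in (V : IA -> Prop) A : V A -> star_algebra A -> star_variety V A.
Proof. intros H1 H2 W _ HW. apply HW; auto. Qed.

Theorem lemma4p16 (V : IA -> Prop) (HV : variety V) (B : IA) (HB : V B)
    (S : IA) (e : S -> B) (HS : is_star_of S B e) :
  projective (star_variety V) S <-> projective V S.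
Proof.
  pose proof (@star_of_star S B e HS) as SS.
  split.
  - intros [HSV Hp]. split; [apply star_variety_sub; auto|].
    intros A C f h HA HC Hf Hsf Hh.
    assert (HAs : star_variety V (star A)).
    { apply star_variety_in; [|apply star_star].
      destruct HV as [_ [HVs _]]. eapply HVs; [exact HA|apply star_incl_hom|apply star_incl_inj]. }
    assert (HCs : star_variety V (star C)).
    { apply star_variety_in; [|apply star_star].
      destruct HV as [_ [HVs _]]. eapply HVs; [exact HC|apply star_incl_hom|apply star_incl_inj]. }
    pose (fs := fun x : star A => (exist _ (f (proj1_sig x)) (hom_go f Hf _ (proj2_sig x)) : star C)).
    pose (hs := fun x : S => (exist _ (h x) (hom_go h Hh _ (SS x)) : star C)).
    assert (Hfs : is_hom fs).
    { destruct Hf as (Hj & Hm & Hc & H0 & H1 & Hg).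
      repeat split; intros; apply sub_eq; simpl; auto. }
    assert (Hhs : is_hom hs).
    { destruct Hh as (Hj & Hm & Hc & H0 & H1 & Hg).
      repeat split; intros; apply sub_eq; simpl; auto. }
    assert (Hsfs : surjective fs).
    { intros [c pc]. destruct (surj_go f Hf Hsf _ pc) as [a [pa Ea]].
      exists (exist _ a pa). apply sub_eq. simpl. exact Ea. }
    destruct (Hp _ _ fs hs HAs HCs Hfs Hsfs Hhs) as [k [Hk Ek]].
    exists (fun x => proj1_sig (k x)). split.
    + destruct Hk as (Hj & Hm & Hc & H0 & H1 & Hg).
      repeat split; intros; simpl; try rewrite Hj; try rewrite Hm; try rewrite Hc;
        try rewrite H0; try rewrite H1; try rewrite Hg; reflexivity.
    + intro x. pose proof (f_equal (@proj1_sig _ _) (Ek x)) as E. simpl in E. exact E.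
  - intros [HSV Hp]. split; [apply star_variety_in; auto|].
    intros A C f h HA HC. apply Hp; apply star_variety_sub; auto.
Qed.
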